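(* Let $\mathcal C$ be a category of noncrossing $\{x,y\}$-coloured partitions ($x^{-1}=x$, $y^{-1}=y$) all of whose blocks have even size. If $\mathcal C$ contains a partition with a block of size at least four, then $\pi(xx,xx)\in\mathcal C$ or $\pi(yy,yy)\in\mathcal C$.
   Context: Colour sets and partitions: a colour set is a set $\mathcal A$ with an involution $a\mapsto a^{-1}$. For words $w,w'$ on $\mathcal A$, an element of $P^{\mathcal A}(w,w')$ is a partition of $|w|+|w'|$ points drawn as an upper row coloured (left to right) by $w$ and a lower row coloured by $w'$; its subsets are blocks. It is noncrossing if there are no four points $k_1<k_2<k_3<k_4$ (ordering: upper row left to right, then lower row right to left) with $k_1,k_3$ in one block and $k_2,k_4$ in a different block. Category operations: tensor product, composition (erasing middle points and closed loops), adjoint (reflection), rotation (moving an extreme point to the other row and replacing its colour $a$ by $a^{-1}$). A category of noncrossing partitions is a family $\mathcal C(w,w')\subset NC^{\mathcal A}(w,w')$ stable under these operations and containing $\pi(a,a)$ for all $a$. $\pi(w,w')$ denotes the one-block partition in $NC(w,w')$. *)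

(* Defs.v *)
From mathcomp Require Import all_boot.
Set Implicit Arguments. Unset Strict Implicit. Unset Printing Implicit Defensive.

(* Points are numbered 0 .. size pu - 1 for the
   upper row (left to right) followed by size pu .. size pu + size pl - 1 for the
   lower row (left to right).  Two points lie in the same block iff they carry
   the same label.  Labels are only a representation: categories are required
   to be closed under change of representation ([peq]). *)
Record part (A : Type) := Part { pu : seq A; pl : seq A; lab : seq nat }.

Definition npts A (p : part A) := size (pu p) + size (pl p).
Definition wf A (p : part A) := size (lab p) == npts p.

Definition blk A (p : part A) (i j : nat) : bool :=
  [&& i < npts p, j < npts p & nth 0 (lab p) i == nth 0 (lab p) j].

Definition block_size A (p : part A) (i : nat) := count (blk p i) (iota 0 (npts p)).

Definition peq A (p q : part A) : Prop :=
  [/\ pu p = pu q, pl p = pl q & forall i j, blk p i j = blk q i j].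

(* cyclic order: upper row left to right, then lower row right to left;
   [cyc p t] is the point at cyclic position t (an involution). *)
Definition cyc A (p : part A) (t : nat) : nat :=
  let k := size (pu p) in
  if t < k then t else k + (size (pl p)).-1 - (t - k).

Definition noncrossing A (p : part A) : Prop :=
  forall k1 k2 k3 k4, k1 < k2 -> k2 < k3 -> k3 < k4 -> k4 < npts p ->
    blk p (cyc p k1) (cyc p k3) -> blk p (cyc p k2) (cyc p k4) ->
    blk p (cyc p k1) (cyc p k2).

Definition onebl A (w w' : seq A) : part A := Part w w' (nseq (size w + size w') 0).

Definition tensor A (p q : part A) : part A :=
  let m := (foldr maxn 0 (lab p)).+1 in
  let kp := size (pu p) in let kq := size (pu q) in
  Part (pu p ++ pu q) (pl p ++ pl q)
       (take kp (lab p) ++ map (addn m) (take kq (lab q)) ++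
        drop kp (lab p) ++ map (addn m) (drop kq (lab q))).

Definition adjoint A (p : part A) : part A :=
  Part (pl p) (pu p) (drop (size (pu p)) (lab p) ++ take (size (pu p)) (lab p)).

(* composition: p on top (in P(w,w')), q below (in P(w',w'')).
   Global nodes: points of p are 0..npts p - 1, points of q are
   npts p .. npts p + npts q - 1; lower point i of p is glued to upper point i of q. *)
Definition cedge A (p q : part A) (a b : nat) : bool :=
  let np := npts p in let kp := size (pu p) in
  [|| blk p a b,
      [&& np <= a, np <= b & blk q (a - np) (b - np)],
      [&& kp <= a, a < np & b == np + (a - kp)] |
      [&& kp <= b, b < np & a == np + (b - kp)] ].

Definition cemb A (p q : part A) (i : nat) : nat :=
  if i < size (pu p) then i else npts p + size (pu q) + (i - size (pu p)).

(* same-block relation of the composite: connected through the middle points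
   (middle points and closed loops are erased) *)
Definition comprel A (p q : part A) (i j : nat) : bool :=
  [&& i < size (pu p) + size (pl q), j < size (pu p) + size (pl q) &
      connect [rel a b : 'I_(npts p + npts q).+1 | cedge p q a b]
              (inord (cemb p q i)) (inord (cemb p q j))].

Record is_category (A : Type) (inv : A -> A) (C : part A -> Prop) : Prop := {
  cat_wf : forall p, C p -> wf p;
  cat_nc : forall p, C p -> noncrossing p;
  cat_repr : forall p q, C p -> wf q -> peq p q -> C q;
  cat_id : forall a, C (Part [:: a] [:: a] [:: 0; 0]);
  cat_tensor : forall p q, C p -> C q -> C (tensor p q);
  cat_adjoint : forall p, C p -> C (adjoint p);
  cat_comp : forall p q r, C p -> C q -> pl p = pu q ->
      wf r -> pu r = pu p -> pl r = pl q ->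
      (forall i j, blk r i j = comprel p q i j) -> C r;
  cat_rotl1 : forall a w w' u us ls, size us = size w -> size ls = size w' ->
      C (Part (a :: w) w' (u :: us ++ ls)) -> C (Part w (inv a :: w') (us ++ u :: ls));
  cat_rotl2 : forall a w w' u us ls, size us = size w -> size ls = size w' ->
      C (Part w (a :: w') (us ++ u :: ls)) -> C (Part (inv a :: w) w' (u :: us ++ ls));
  cat_rotr1 : forall a w w' u us ls, size us = size w -> size ls = size w' ->
      C (Part (rcons w a) w' (rcons us u ++ ls)) -> C (Part w (rcons w' (inv a)) (us ++ rcons ls u));
  cat_rotr2 : forall a w w' u us ls, size us = size w -> size ls = size w' ->
      C (Part w (rcons w' a) (us ++ rcons ls u)) -> C (Part (rcons w (inv a)) w' (rcons us u ++ ls))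
}.

Definition xc : bool := false.
Definition yc : bool := true.
Definition xyinv : bool -> bool := id.

(* Main.v *)
Require Import Defs.
From mathcomp Require Import all_boot zify.
Set Implicit Arguments. Unset Strict Implicit.

Definition mk (k : nat) (s : seq bool) (ls : seq nat) : part bool :=
  Part (take k s) (rev (drop k s)) (take k ls ++ rev (drop k ls)).

Lemma mk_eq (p : part bool) : wf p ->
  p = mk (size (pu p)) (pu p ++ rev (pl p))
         (take (size (pu p)) (lab p) ++ rev (drop (size (pu p)) (lab p))).
Proof.
case: p => u l lb; rewrite /wf /npts /mk /= => /eqP Hs.
have Ht : size (take (size u) lb) = size u by rewrite size_takel; lia.
by rewrite take_size_cat // drop_size_cat // revK take_size_cat // drop_size_cat // revK cat_take_drop.
Qed.

Lemma size_mk_pu k s ls : k <= size s -> size (pu (mk k s ls)) = k.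
Proof. by move=> h; rewrite /= size_takel. Qed.
Lemma size_mk_pl k s ls : size (pl (mk k s ls)) = size s - k.
Proof. by rewrite /= size_rev size_drop. Qed.
Lemma npts_mk k s ls : k <= size s -> npts (mk k s ls) = size s.
Proof. by move=> h; rewrite /npts size_mk_pu // size_mk_pl; lia. Qed.
Lemma wf_mk k s ls : k <= size s -> size ls = size s -> wf (mk k s ls).
Proof.
move=> h e; rewrite /wf npts_mk //= size_cat size_rev size_takel ?size_drop; [apply/eqP; lia| lia].
Qed.

Lemma cyc_mk k s ls t : k <= size s -> t < size s ->
  cyc (mk k s ls) t = if t < k then t else k + (size s - k - 1) - (t - k).
Proof. by move=> h ht; rewrite /cyc size_mk_pu // size_mk_pl subn1. Qed.

Lemma cyc_lt k s ls t : k <= size s -> t < size s -> cyc (mk k s ls) t < size s.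
Proof. move=> h ht; rewrite cyc_mk //; case: ifP => h1; lia. Qed.

Lemma cycK k s ls t : k <= size s -> t < size s -> cyc (mk k s ls) (cyc (mk k s ls) t) = t.
Proof.
move=> h ht; rewrite (cyc_mk _ h ht) (cyc_mk _ h); last by case: ifP => ?; lia.
case: (ltnP t k) => h1; first by rewrite h1.
rewrite ifF; first lia.
apply/negbTE; rewrite -leqNgt; lia.
Qed.

Lemma nth_cyc k s ls t : k <= size s -> size ls = size s -> t < size s ->
  nth 0 (lab (mk k s ls)) (cyc (mk k s ls) t) = nth 0 ls t.
Proof.
move=> h e ht; rewrite cyc_mk //= nth_cat size_takel; last lia.
case: (ltnP t k) => h1.
  by rewrite h1 nth_take.
rewrite ifF; last by apply/negbTE; rewrite -leqNgt; lia.
rewrite nth_rev; last by rewrite size_drop; lia.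
rewrite size_drop.
rewrite nth_drop; congr nth; lia.
Qed.

Lemma blk_cyc k s ls t t' : k <= size s -> size ls = size s -> t < size s -> t' < size s ->
  blk (mk k s ls) (cyc (mk k s ls) t) (cyc (mk k s ls) t') = (nth 0 ls t == nth 0 ls t').
Proof.
move=> h e ht ht'; rewrite /blk npts_mk // !cyc_lt // !nth_cyc //.
Qed.

Lemma split_up (C : part bool -> Prop) (HC : is_category xyinv C) k s ls :
  size ls = size s -> k < size s -> C (mk k s ls) -> C (mk k.+1 s ls).
Proof.
move=> e h H.
have := @cat_rotr2 _ _ _ HC (nth false s k) (take k s) (rev (drop k.+1 s)) (nth 0 ls k)
   (take k ls) (rev (drop k.+1 ls)).
rewrite /xyinv /mk (take_nth false) // (take_nth 0) ?e //; apply.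
- by rewrite !size_takel ?e //; lia.
- by rewrite !size_rev !size_drop e.
by move: H; rewrite /mk (drop_nth false h) (@drop_nth _ 0 k ls) ?e // !rev_cons.
Qed.

Lemma split_down (C : part bool -> Prop) (HC : is_category xyinv C) k s ls :
  size ls = size s -> k < size s -> C (mk k.+1 s ls) -> C (mk k s ls).
Proof.
move=> e h H.
have := @cat_rotr1 _ _ _ HC (nth false s k) (take k s) (rev (drop k.+1 s)) (nth 0 ls k)
   (take k ls) (rev (drop k.+1 ls)).
rewrite /xyinv /mk (drop_nth false h) (@drop_nth _ 0 k ls); last by rewrite e.
rewrite !rev_cons; apply.
- by rewrite !size_takel ?e //; lia.
- by rewrite !size_rev !size_drop e.
by move: H; rewrite /mk (take_nth false) // (take_nth 0) ?e.
Qed.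

Lemma split_any (C : part bool -> Prop) (HC : is_category xyinv C) k k' s ls :
  size ls = size s -> k <= size s -> k' <= size s -> C (mk k s ls) -> C (mk k' s ls).
Proof.
move=> e h h' H.
have up : forall d, k + d <= size s -> C (mk (k + d) s ls).
  elim=> [|d IH] hd; first by rewrite addn0.
  rewrite addnS; apply: split_up => //; first lia.
  apply: IH; lia.
have down : forall d, d <= k -> C (mk (k - d) s ls).
  elim=> [|d IH] hd; first by rewrite subn0.
  apply: split_down => //; first lia.
  rewrite (_ : (k - d.+1).+1 = k - d); last lia.
  apply: IH; lia.
case: (leqP k k') => hk.
  have -> : k' = k + (k' - k) by lia.
  apply: up; lia.
have -> : k' = k - (k - k') by lia.
apply: down; lia.
Qed.

Lemma rot_one (C : part bool -> Prop) (HC : is_category xyinv C) k s ls :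
  size ls = size s -> 0 < size s -> k <= size s -> C (mk k s ls) ->
  C (mk k (rot 1 s) (rot 1 ls)).
Proof.
move=> e h hk H.
have H1 : C (mk 1 s ls) by apply: (split_any HC (k:=k)).
case: s e h hk H H1 => [//|a s]; case: ls => [//|u ls] /= [e] _ hk H H1.
rewrite !rot1_cons.
apply: (split_any HC (k:=0)); rewrite ?size_rcons ?e //.
have H2 : C (Part [::a] (rev s) (u :: rev ls)).
  by move: H1; rewrite /mk /= !take0 !drop0.
have Hs : size (rev ls) = size (rev s) by rewrite !size_rev e.
have := @cat_rotl1 _ _ _ HC a [::] (rev s) u [::] (rev ls) erefl Hs H2.
by rewrite /mk !take0 !drop0 !rev_rcons.
Qed.

Lemma rot_any (C : part bool -> Prop) (HC : is_category xyinv C) k s ls j :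
  size ls = size s -> k <= size s -> j < size s -> C (mk k s ls) ->
  C (mk k (rot j s) (rot j ls)).
Proof.
move=> e hk; elim: j => [|j IH] hj H; first by rewrite !rot0.
rewrite rotS; last lia. rewrite (rotS (s:=ls)); last lia.
apply: rot_one => //; rewrite ?size_rot //; try lia.
apply: IH => //; lia.
Qed.

Lemma nth_rot1 (T : Type) (x0 : T) (s : seq T) j i : j <= size s -> i < size s - j ->
  nth x0 (rot j s) i = nth x0 s (j + i).
Proof. by move=> h hi; rewrite /rot nth_cat size_drop hi nth_drop. Qed.

Lemma nth_rot2 (T : Type) (x0 : T) (s : seq T) j i : j <= size s -> size s - j <= i ->
  i < size s -> nth x0 (rot j s) i = nth x0 s (i - (size s - j)).
Proof.
move=> h hi hi'; rewrite /rot nth_cat size_drop ltnNge hi /= nth_take //; lia.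
Qed.

Definition crel (p q : part bool) : rel 'I_(npts p + npts q).+1 :=
  fun a b => cedge p q a b.

Definition node (p q : part bool) (a : nat) : 'I_(npts p + npts q).+1 := inord a.

Arguments crel : clear implicits.
Arguments node : clear implicits.

Lemma comprelE (p q : part bool) i j : comprel p q i j =
  [&& i < size (pu p) + size (pl q), j < size (pu p) + size (pl q) &
      connect (crel p q) (node p q (cemb p q i)) (node p q (cemb p q j))].
Proof. by []. Qed.

Lemma blk_sym (p : part bool) a b : blk p a b = blk p b a.
Proof. by rewrite /blk eq_sym andbCA. Qed.

Lemma blk_trans (p : part bool) a b c : blk p a b -> blk p b c -> blk p a c.
Proof. by rewrite /blk => /and3P [ha _ /eqP e1] /and3P [_ hc /eqP e2]; rewrite ha hc e1 e2 eqxx. Qed.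

Lemma crel_sym (p q : part bool) : symmetric (crel p q).
Proof.
move=> a b; rewrite /crel /cedge.
have E2 : forall x y : nat, [&& npts p <= x, npts p <= y & blk q (x - npts p) (y - npts p)] =
   [&& npts p <= y, npts p <= x & blk q (y - npts p) (x - npts p)].
  by move=> x y; rewrite blk_sym andbCA.
rewrite E2 (blk_sym p a).
case: (blk p b a) => //=; case: [&& npts p <= b, _ & _] => //=.
by rewrite orbC.
Qed.

Lemma comprel_sym (p q : part bool) i j : comprel p q i j = comprel p q j i.
Proof.
rewrite !comprelE (sym_connect_sym (@crel_sym p q)).
by case: (i < _); case: (j < _).
Qed.

Lemma comprel_trans (p q : part bool) i j l : comprel p q i j -> comprel p q j l -> comprel p q i l.
Proof.
rewrite !comprelE => /and3P [-> _ h1] /and3P [_ -> h2] /=.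
exact: connect_trans h1 h2.
Qed.

Lemma comprel_refl (p q : part bool) i : i < size (pu p) + size (pl q) -> comprel p q i i.
Proof. by move=> h; rewrite comprelE h connect0. Qed.

Lemma comp_exists (C : part bool -> Prop) (HC : is_category xyinv C) p q :
  C p -> C q -> pl p = pu q ->
  exists r, [/\ C r, wf r, pu r = pu p, pl r = pl q &
               forall i j, blk r i j = comprel p q i j].
Proof.
move=> Cp Cq e.
set N := size (pu p) + size (pl q).
set lb := map (fun i => find (comprel p q i) (iota 0 N)) (iota 0 N).
have Hb : forall i j, blk (Part (pu p) (pl q) lb) i j = comprel p q i j.
  move=> i j; rewrite /blk /npts /=.
  case: (ltnP i N) => hi; last by rewrite comprelE -/N (ltnNge i N) hi.
  case: (ltnP j N) => hj; last by rewrite comprelE -/N (ltnNge j N) hj hi.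
  rewrite /= !(nth_map 0) ?size_iota // !nth_iota // !add0n.
  apply/eqP/idP => [hf|hij].
    have hasi : has (comprel p q i) (iota 0 N).
      by apply/hasP; exists i; rewrite ?mem_iota ?comprel_refl.
    have hasj : has (comprel p q j) (iota 0 N).
      by apply/hasP; exists j; rewrite ?mem_iota ?comprel_refl.
    have := nth_find 0 hasi; have := nth_find 0 hasj.
    rewrite has_find size_iota in hasi; rewrite has_find size_iota in hasj.
    rewrite !nth_iota // hf !add0n => hj' hi'.
    by apply: comprel_trans hi' _; rewrite comprel_sym.
  apply: eq_find => x; apply/idP/idP => h.
    by apply: comprel_trans h; rewrite comprel_sym.
  exact: comprel_trans hij h.
have Hw : wf (Part (pu p) (pl q) lb) by rewrite /wf /npts /= size_map size_iota.
exists (Part (pu p) (pl q) lb); split => //.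
exact: (cat_comp HC Cp Cq e Hw).
Qed.

Lemma node_val (p q : part bool) a : a <= npts p + npts q -> nat_of_ord (node p q a) = a.
Proof. by move=> h; rewrite /node inordK. Qed.

Lemma conn_edge (p q : part bool) a b : a <= npts p + npts q -> b <= npts p + npts q ->
  cedge p q a b -> connect (crel p q) (node p q a) (node p q b).
Proof. by move=> ha hb e; apply: connect1; rewrite /crel !node_val. Qed.

Lemma npts_adj (p : part bool) : npts (adjoint p) = size (pl p) + size (pu p).
Proof. by []. Qed.

Lemma nth_adj1 (p : part bool) t : wf p -> t < size (pl p) ->
  nth 0 (lab (adjoint p)) t = nth 0 (lab p) (size (pu p) + t).
Proof.
rewrite /wf /npts => /eqP e ht; rewrite /= nth_cat size_drop e.
by rewrite (_ : t < _ = true) ?nth_drop //; lia.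
Qed.

Lemma nth_adj2 (p : part bool) i : wf p -> i < size (pu p) ->
  nth 0 (lab (adjoint p)) (size (pl p) + i) = nth 0 (lab p) i.
Proof.
rewrite /wf /npts => /eqP e ht; rewrite /= nth_cat size_drop e.
rewrite (_ : _ < _ = false); last lia.
by rewrite nth_take; [congr nth|]; lia.
Qed.

Lemma comprel_a (p : part bool) i j : wf p -> i < size (pu p) -> j < size (pu p) ->
  blk p i j -> comprel p (adjoint p) i j.
Proof.
move=> w hi hj hb; rewrite comprelE /= /cemb hi hj.
rewrite (_ : i < _ = true); last lia. rewrite (_ : j < _ = true); last lia.
apply: conn_edge; rewrite ?npts_adj /npts; try lia.
by rewrite /cedge hb.
Qed.

Lemma comprel_b (p : part bool) i t i' : wf p -> i < size (pu p) -> t < size (pl p) ->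
  i' < size (pu p) -> blk p i (size (pu p) + t) -> blk p (size (pu p) + t) i' ->
  comprel p (adjoint p) i (size (pu p) + i').
Proof.
move=> w hi ht hi' h1 h2; rewrite comprelE /= /cemb hi.
rewrite (_ : size (pu p) + i' < size (pu p) = false); last lia.
rewrite (_ : i < _ = true); last lia. rewrite (_ : _ + i' < _ = true); last lia.
rewrite (_ : size (pu p) + i' - size (pu p) = i'); last lia.
apply: (connect_trans (y := node p (adjoint p) (size (pu p) + t))).
  apply: conn_edge; rewrite ?npts_adj /npts; try lia.
  by rewrite /cedge h1.
apply: (connect_trans (y := node p (adjoint p) (npts p + t))).
  apply: conn_edge; rewrite ?npts_adj /npts; try lia.
  rewrite /cedge; apply/orP; right; apply/orP; right; apply/orP; left.
  apply/and3P; split; rewrite /npts; [lia|lia|apply/eqP; lia].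
apply: conn_edge; rewrite ?npts_adj /npts /=; try lia.
rewrite /cedge; apply/orP; right; apply/orP; left.
apply/and3P; split; try (rewrite /npts; lia).
rewrite /npts (_ : size (pu p) + size (pl p) + t - (size (pu p) + size (pl p)) = t); last lia.
rewrite (_ : size (pu p) + size (pl p) + size (pl p) + i' - (size (pu p) + size (pl p)) = size (pl p) + i'); last lia.
move: h2; rewrite /blk npts_adj nth_adj1 // nth_adj2 // => /and3P [_ _ ->].
rewrite andbT; apply/andP; split; lia.
Qed.

Lemma double (C : part bool -> Prop) (HC : is_category xyinv C) p k :
  C p -> wf p -> size (pu p) = k -> 0 < k -> blk p 0 (k - 1) ->
  (exists j, [/\ k <= j, j < npts p & blk p 0 j]) ->
  exists r, [/\ C r, wf r, pu r = pu p, pl r = pu p &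
    [/\ blk r (k - 1) 0, blk r (k - 1) (k + (k - 1)) & blk r 0 k]].
Proof.
move=> Cp w hk k0 h0 [j [hj1 hj2 hj3]].
have [r [Cr wr e1 e2 hr]] := comp_exists HC Cp (cat_adjoint HC Cp) (erefl (pl p)).
exists r; split => //.
subst k; rewrite !hr.
have hjl : j - size (pu p) < size (pl p) by move: hj2; rewrite /npts; lia.
have ej : size (pu p) + (j - size (pu p)) = j by lia.
have hb1 : blk p (size (pu p) - 1) 0 by rewrite blk_sym.
have hb2 : blk p (size (pu p) - 1) j by apply: blk_trans hb1 hj3.
split.
- apply: comprel_a hb1 => //; lia.
- apply: (comprel_b (t := j - size (pu p))) => //; try lia.
    by rewrite ej.
  by rewrite ej blk_sym.
- rewrite -{1}(addn0 (size (pu p))); apply: (comprel_b (t := j - size (pu p))) => //; try lia.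
    by rewrite ej.
  by rewrite ej blk_sym.
Qed.

Lemma cyc_up k s ls t : k <= size s -> t < k -> cyc (mk k s ls) t = t.
Proof. by move=> h ht; rewrite cyc_mk ?ht //; lia. Qed.

Lemma cyc_low k s ls t : k <= t -> t < size s ->
  cyc (mk k s ls) t = k + (size s - k - 1) - (t - k).
Proof.
move=> h ht; rewrite cyc_mk //; last lia.
by rewrite ifF //; apply/negbTE; rewrite -leqNgt.
Qed.

Lemma take2 (T : Type) (x0 : T) (l : seq T) : 1 < size l -> take 2 l = [:: nth x0 l 0; nth x0 l 1].
Proof. by case: l => [|a [|b l']] //=; rewrite take0. Qed.

Lemma rotate_step (C : part bool -> Prop) (HC : is_category xyinv C) r U :
  C r -> wf r -> pu r = U -> pl r = U -> 2 <= size U ->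
  blk r (size U - 1) 0 -> blk r (size U - 1) (size U + (size U - 1)) ->
  exists r2, [/\ C r2, wf r2,
    pu r2 = [:: nth false U (size U - 1); nth false U (size U - 1)],
    blk r2 0 1 & exists j, [/\ 2 <= j, j < npts r2 & blk r2 0 j]].
Proof.
move=> Cr wr e1 e2 hk b1 b2.
set k := size U in hk b1 b2 *.
have E := mk_eq wr; rewrite e1 e2 in E.
set s1 := U ++ rev U in E; set ls1 := take _ _ ++ _ in E.
have hs : size s1 = k + k by rewrite size_cat size_rev.
have hls : size ls1 = size s1.
  move: wr; rewrite /wf /npts e1 e2 => /eqP e.
  rewrite hs /ls1 size_cat size_rev size_drop size_takel e // -/k; lia.
have hk1 : k <= size s1 by lia.
have C1 : C (mk k s1 ls1) by rewrite -E.
have c0 : cyc (mk k s1 ls1) 0 = 0 by rewrite cyc_up //; lia.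
have c1 : cyc (mk k s1 ls1) (k - 1) = k - 1 by rewrite cyc_up //; lia.
have c2 : cyc (mk k s1 ls1) k = k + (k - 1).
  by rewrite cyc_low // hs; lia.
have q1 : nth 0 ls1 (k - 1) == nth 0 ls1 0.
  rewrite -(blk_cyc hk1 hls); try lia.
  by rewrite c0 c1 -E.
have q2 : nth 0 ls1 (k - 1) == nth 0 ls1 k.
  rewrite -(blk_cyc hk1 hls); try lia.
  by rewrite c2 c1 -E.
set j := k - 1.
have hj : j < size s1 by lia.
have hrs : size (rot j ls1) = size (rot j s1) by rewrite !size_rot.
have hr2 : 2 <= size (rot j s1) by rewrite size_rot; lia.
exists (mk 2 (rot j s1) (rot j ls1)); split.
- apply: (split_any HC (k := k)) => //; rewrite ?size_rot //.
  exact: rot_any.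
- exact: wf_mk.
- rewrite /= (take2 false); last by rewrite size_rot; lia.
  rewrite !nth_rot1; try lia.
  rewrite /s1 !nth_cat -/k (_ : j + 0 < k = true); last lia.
  rewrite (_ : j + 1 < k = false); last lia.
  rewrite nth_rev; last lia.
  by rewrite addn0 (_ : k - (j + 1 - k).+1 = j) //; lia.
- have := blk_cyc (k := 2) hr2 hrs (t := 0) (t' := 1).
  rewrite !cyc_up //; move=> ->; try lia.
  rewrite !nth_rot1 ?addn0; try lia.
  by rewrite (_ : j + 1 = k) //; lia.
- exists k; split; first lia.
    by rewrite npts_mk // size_rot; lia.
  have := blk_cyc (k := 2) hr2 hrs (t := 0) (t' := k.+1).
  rewrite cyc_up // cyc_low ?size_rot; try lia.
  rewrite (_ : 2 + (size s1 - 2 - 1) - (k.+1 - 2) = k); last lia.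
  move=> ->; try lia.
  rewrite nth_rot1 ?nth_rot2 ?addn0; try lia.
  by rewrite (_ : k.+1 - (size ls1 - j) = 0) //; lia.
Qed.

Lemma final (C : part bool -> Prop) (HC : is_category xyinv C) r c :
  C r -> wf r -> pu r = [:: c; c] -> pl r = [:: c; c] ->
  blk r 1 0 -> blk r 1 3 -> blk r 0 2 -> C (onebl [:: c; c] [:: c; c]).
Proof.
move=> Cr wr e1 e2 b1 b2 b3; apply: (cat_repr HC Cr) => //.
have hn : npts r = 4 by rewrite /npts e1 e2.
move: b1 b2 b3; rewrite /blk hn /= => /eqP l1 /eqP l2 /eqP l3.
have hl : forall i, i < 4 -> nth 0 (lab r) i = nth 0 (lab r) 0.
  by case=> [|[|[|[|i]]]] //= _; rewrite ?l3 ?l1 // -l2 l1.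
split; rewrite ?e1 ?e2 // => i j; rewrite /blk hn /npts /= (_ : 2 + 2 = 4) //.
case: (ltnP i 4) => hi; case: (ltnP j 4) => hj //=.
case: i hi => [|[|[|[|i]]]] // _; case: j hj => [|[|[|[|j]]]] // _; by rewrite ?hl // eqxx.
Qed.

Lemma from_p1 (C : part bool -> Prop) (HC : is_category xyinv C) p k :
  C p -> wf p -> size (pu p) = k -> 1 < k -> blk p 0 (k - 1) ->
  (exists j, [/\ k <= j, j < npts p & blk p 0 j]) ->
  exists c, C (onebl [:: c; c] [:: c; c]).
Proof.
move=> Cp wp hk k1 h0 hj.
have [r1 [Cr1 wr1 e1 e2 [b1 b2 b3]]] := double HC Cp wp hk (ltnW k1) h0 hj.
rewrite -hk -e1 in b1 b2.
have e12 : pl r1 = pu r1 by rewrite e1 e2.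
have hs1 : 2 <= size (pu r1) by rewrite e1 hk.
have [r2 [Cr2 wr2 e3 b4 hj2]] := rotate_step HC Cr1 wr1 erefl e12 hs1 b1 b2.
have hs2 : size (pu r2) = 2 by rewrite e3.
have [r3 [Cr3 wr3 e4 e5 [c1 c2 c3]]] := double HC Cr2 wr2 hs2 erefl b4 hj2.
exists (nth false (pu r1) (size (pu r1) - 1)).
apply: (final HC Cr3 wr3); rewrite ?e4 ?e5 //.
Qed.

Lemma sort3 (P : nat -> Prop) n a b c : a < n -> b < n -> c < n -> a != b -> a != c -> b != c ->
  P a -> P b -> P c -> exists x y z, [/\ x < y, y < z, z < n & [/\ P x, P y & P z]].
Proof.
move=> ha hb hc /eqP ab /eqP ac /eqP bc pa pb pc.
case: (ltngtP a b) => h1; last by [].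
- case: (ltngtP b c) => h2; last by [].
  + by exists a, b, c; split.
  + case: (ltngtP a c) => h3; last by [].
    * by exists a, c, b; split.
    * by exists c, a, b; split.
- case: (ltngtP a c) => h2; last by [].
  + by exists b, a, c; split.
  + case: (ltngtP b c) => h3; last by [].
    * by exists b, c, a; split.
    * by exists c, b, a; split.
Qed.

Lemma start (C : part bool -> Prop) (HC : is_category xyinv C) p i :
  C p -> i < npts p -> 4 <= block_size p i -> exists c, C (onebl [:: c; c] [:: c; c]).
Proof.
move=> Cp hi hB.
have wp : wf p := cat_wf HC Cp.
have E := mk_eq wp.
set k0 := size (pu p) in E; set s0 := pu p ++ _ in E; set ls0 := take _ _ ++ _ in E.
have hn : size s0 = npts p by rewrite /s0 size_cat size_rev.
have hk0 : k0 <= size s0 by rewrite hn /npts /k0 leq_addr.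
have hls : size ls0 = size s0.
  move: wp; rewrite /wf => /eqP e.
  rewrite hn /ls0 size_cat size_rev size_drop size_takel e //; rewrite /k0 /npts; lia.
set F := filter (blk p i) (iota 0 (npts p)).
have hF : 4 <= size F by rewrite size_filter.
have uF : uniq F by rewrite filter_uniq // iota_uniq.
have inF : forall a, a < size F -> blk p i (nth 0 F a) /\ nth 0 F a < npts p.
  move=> a ha; have := mem_nth 0 ha; rewrite mem_filter mem_iota => /andP [-> /andP [_ h]].
  by split => //; move: h; rewrite add0n.
have dF : forall a b, a < size F -> b < size F -> a != b -> nth 0 F a != nth 0 F b.
  by move=> a b ha hb; rewrite nth_uniq.
set L := nth 0 (lab p) i.
have pos : forall j, j < npts p -> blk p i j ->
   cyc (mk k0 s0 ls0) j < size s0 /\ nth 0 ls0 (cyc (mk k0 s0 ls0) j) = L.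
  move=> j hj hbj; rewrite -hn in hj; split; first exact: cyc_lt.
  rewrite -(nth_cyc hk0 hls); last exact: cyc_lt.
  rewrite cycK // -E /L; move: hbj; rewrite /blk => /and3P [_ _ /eqP ->] //.
have [b0 n0] := inF 0 (leq_trans (isT : 0 < 4) hF).
have [b1 n1] := inF 1 (leq_trans (isT : 1 < 4) hF).
have [b2 n2] := inF 2 (leq_trans (isT : 2 < 4) hF).
have d01 := dF 0 1 (leq_trans (isT : 0 < 4) hF) (leq_trans (isT : 1 < 4) hF) isT.
have d02 := dF 0 2 (leq_trans (isT : 0 < 4) hF) (leq_trans (isT : 2 < 4) hF) isT.
have d12 := dF 1 2 (leq_trans (isT : 1 < 4) hF) (leq_trans (isT : 2 < 4) hF) isT.
have [q0 r0] := pos _ n0 b0.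
have [q1 r1] := pos _ n1 b1.
have [q2 r2] := pos _ n2 b2.
have cinj : forall a b, a < size s0 -> b < size s0 -> a != b ->
    cyc (mk k0 s0 ls0) a != cyc (mk k0 s0 ls0) b.
  move=> a b ha hb; apply: contra => /eqP h.
  by rewrite -(cycK ls0 hk0 ha) h cycK.
rewrite -hn in n0 n1 n2.
have [x [y [z [hxy hyz hzn [px py pz]]]]] :=
  sort3 (P := fun t => nth 0 ls0 t = L) q0 q1 q2 (cinj _ _ n0 n1 d01) (cinj _ _ n0 n2 d02)
    (cinj _ _ n1 n2 d12) r0 r1 r2.
set k := y - x + 1.
have hkn : k <= size s0 by rewrite /k; lia.
have Cp1 : C (mk k (rot x s0) (rot x ls0)).
  apply: (split_any HC (k := k0)); rewrite ?size_rot //; try lia.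
  by apply: rot_any => //; [lia | rewrite -E].
have hrs : size (rot x ls0) = size (rot x s0) by rewrite !size_rot.
have hkr : k <= size (rot x s0) by rewrite size_rot.
apply: (from_p1 HC Cp1 (wf_mk hkr hrs) (k := k)).
- by rewrite size_mk_pu.
- rewrite /k; lia.
- have := blk_cyc hkr hrs (t := 0) (t' := y - x).
  rewrite !cyc_up; try (rewrite /k; lia).
  rewrite (_ : y - x = k - 1); last by rewrite /k; lia.
  move=> ->; try (rewrite size_rot; lia).
  rewrite !nth_rot1; try lia.
  by rewrite addn0 (_ : x + (k - 1) = y) ?px ?py //; rewrite /k; lia.
exists (cyc (mk k (rot x s0) (rot x ls0)) (z - x)); split.
- rewrite cyc_low; rewrite ?size_rot /k; lia.
- rewrite npts_mk //; apply: cyc_lt => //; rewrite size_rot; lia.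
have := blk_cyc hkr hrs (t := 0) (t' := z - x).
rewrite cyc_up; try (rewrite /k; lia).
move=> ->; try (rewrite size_rot; lia).
rewrite !nth_rot1; try lia.
by rewrite addn0 (_ : x + (z - x) = z) ?px ?pz //; lia.
Qed.

Unset Implicit Arguments.

Theorem lemma6p1 (C : part bool -> Prop) (HC : is_category xyinv C)
  (Heven : forall p, C p -> forall i, i < npts p -> ~~ odd (block_size p i))
  (H4 : exists p, C p /\ exists2 i, i < npts p & 4 <= block_size p i) :
  C (onebl [:: xc; xc] [:: xc; xc]) \/ C (onebl [:: yc; yc] [:: yc; yc]).
Proof.
case: H4 => p [Cp [i hi hb]].
have [[] Hc] := start HC Cp hi hb; [by right | by left].
Qed.
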